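(* Let $G_*$ be a (not necessarily symmetric) crossed simplicial group with structural projection $\pi\colon G_*\to N_*$, and suppose there exists a morphism of simplicial sets $\eta\colon N_*\to G_*$ with $\pi\circ\eta=\mathrm{id}_{N_*}$. Then $\pi\colon G_*\to N_*$ is a Kan fibration of simplicial sets.
   Context: A crossed simplicial group $G_*$ consists of groups $G_n$ ($n\ge0$), a left action of $G_n$ on $[n]=\{0,\dots,n\}$, and maps $d_i\colon G_n\to G_{n-1}$, $s_i\colon G_n\to G_{n+1}$ making $G_*$ a simplicial set, such that $d_i(gh)=d_i(g)d_{g^{-1}(i)}(h)$ and $s_i(gh)=s_i(g)s_{g^{-1}(i)}(h)$. By the structure theorem of Fiedorowicz–Loday and Krasauskas there is a canonical short exact sequence of crossed simplicial groups $1\to P_*\to G_*\xrightarrow{\pi}N_*\to1$ where $P_*$ is a simplicial group and $N_*$ is one of the seven crossed simplicial groups $\{1\}, C_*, \mathbb{Z}/2, S_*, D_*, \mathbb{Z}/2\times S_*, H_*$; $\pi$ is called the structural projection. *)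

(* Defs.v *)
From mathcomp Require Import all_boot.
Set Implicit Arguments. Unset Strict Implicit. Unset Printing Implicit Defensive.

(* face n i : X_{n+1} -> X_n  is d_i  (meaningful for i <= n+1)        *)
(* degen n i : X_n -> X_{n+1} is s_i  (meaningful for i <= n)          *)
(* Values at out-of-range indices are junk and never constrained.      *)
Record SSet := {
  sobj :> nat -> Type;
  face : forall n, nat -> sobj n.+1 -> sobj n;
  degen : forall n, nat -> sobj n -> sobj n.+1;
  face_face : forall n (x : sobj n.+2) i j, i < j -> j <= n.+2 ->
    face i (face j x) = face j.-1 (face i x);
  degen_degen : forall n (x : sobj n) i j, i <= j -> j <= n ->
    degen i (degen j x) = degen j.+1 (degen i x);
  face_degen_lt : forall n (x : sobj n.+1) i j, i < j -> j <= n.+1 ->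
    face i (degen j x) = degen j.-1 (face i x);
  face_degen_eq : forall n (x : sobj n) i j, j <= n -> (i = j \/ i = j.+1) ->
    face i (degen j x) = x;
  face_degen_gt : forall n (x : sobj n.+1) i j, j.+1 < i -> i <= n.+2 ->
    face i (degen j x) = degen j (face i.-1 x)
}.
Arguments face {s n}.
Arguments degen {s n}.

Definition is_smap (X Y : SSet) (f : forall n, X n -> Y n) : Prop :=
  (forall n i (x : X n.+1), i <= n.+1 -> f n (face i x) = face i (f n.+1 x)) /\
  (forall n i (x : X n), i <= n -> f n.+1 (degen i x) = degen i (f n x)).

Record CSG := {
  css :> SSet;
  mul : forall n, css n -> css n -> css n;
  one : forall n, css n;
  inv : forall n, css n -> css n;
  mulA : forall n (a b c : css n), mul a (mul b c) = mul (mul a b) c;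
  mul1g : forall n (a : css n), mul (one n) a = a;
  mulVg : forall n (a : css n), mul (inv a) a = one n;
  act : forall n, css n -> nat -> nat;
  act_range : forall n (g : css n) i, i <= n -> act g i <= n;
  act1 : forall n i, i <= n -> act (one n) i = i;
  actM : forall n (g h : css n) i, i <= n -> act (mul g h) i = act g (act h i);
  face_mul : forall n (g h : css n.+1) i, i <= n.+1 ->
    face i (mul g h) = mul (face i g) (face (act (inv g) i) h);
  degen_mul : forall n (g h : css n) i, i <= n ->
    degen i (mul g h) = mul (degen i g) (degen (act (inv g) i) h)
}.
Arguments mul {c0 n} : rename.
Arguments one {c0} : rename.
Arguments inv {c0 n} : rename.
Arguments act {c0 n} : rename.

Definition is_csg_morphism (G N : CSG) (f : forall n, G n -> N n) : Prop :=
  is_smap f /\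
  (forall n (g h : G n), f n (mul g h) = mul (f n g) (f n h)) /\
  (forall n (g : G n) i, i <= n -> act (f n g) i = act g i).

(* N is reduced: it has no nontrivial normal crossed simplicial subgroup
   acting trivially on the [n] (i.e. no nontrivial normal sub-simplicial
   group).  The seven crossed simplicial groups of the structure theorem
   are exactly the reduced quotients. *)
Definition csg_reduced (N : CSG) : Prop :=
  forall Q : forall n, N n -> Prop,
    (forall n, Q n (one n)) ->
    (forall n (x y : N n), Q n x -> Q n y -> Q n (mul x y)) ->
    (forall n (x : N n), Q n x -> Q n (inv x)) ->
    (forall n (g x : N n), Q n x -> Q n (mul (mul g x) (inv g))) ->
    (forall n i (x : N n.+1), i <= n.+1 -> Q n.+1 x -> Q n (face i x)) ->
    (forall n i (x : N n), i <= n -> Q n x -> Q n.+1 (degen i x)) ->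
    (forall n (x : N n) i, Q n x -> i <= n -> act x i = i) ->
    forall n (x : N n), Q n x -> x = one n.

(* pi : G_* -> N_* is the structural projection: a levelwise surjective
   morphism of crossed simplicial groups (its kernel P_* then acts
   trivially, i.e. is a simplicial group) onto a reduced crossed
   simplicial group.  This determines 1 -> P_* -> G_* -> N_* -> 1 up to
   isomorphism (P_* is the largest normal sub-simplicial group of G_* ) . *)
Definition is_structural_projection (G N : CSG) (pi : forall n, G n -> N n)
  : Prop :=
  is_csg_morphism pi /\
  (forall n (y : N n), exists x : G n, pi n x = y) /\
  csg_reduced N.

(* Kan fibrations.  A horn Lambda^{m+1}_k in X is a family x_i in X_m, *)
(* i in [m+1] \ {k}, with d_i x_j = d_{j-1} x_i for i < j.             *)
Definition horn_compat (X : SSet) (m : nat) : (nat -> X m) -> nat -> Prop :=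
  match m return (nat -> X m) -> nat -> Prop with
  | 0 => fun _ _ => True
  | m'.+1 => fun x k => forall i j, i < j -> j <= m'.+2 -> i != k -> j != k ->
      @face X m' i (x j) = @face X m' j.-1 (x i)
  end.

Definition is_kan_fibration (X Y : SSet) (p : forall n, X n -> Y n) : Prop :=
  forall (m k : nat) (x : nat -> X m) (y : Y m.+1),
    k <= m.+1 ->
    horn_compat x k ->
    (forall i, i <= m.+1 -> i != k -> face i y = p m (x i)) ->
    exists z : X m.+1,
      (forall i, i <= m.+1 -> i != k -> face i z = x i) /\ p m.+1 z = y.

(* Main.v *)
From Pilot Require Import Defs.
From mathcomp Require Import all_boot zify.
Import Pilot.Defs.
Set Implicit Arguments. Unset Strict Implicit.

Section Grp.
Variable C : CSG.
Lemma mulgV n (a : C n) : mul a (inv a) = one n.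
Proof.
by rewrite -[mul a _]mul1g -(mulVg (inv a)) -mulA (mulA (inv a)) mulVg mul1g.
Qed.
Lemma mulg1 n (a : C n) : mul a (one n) = a.
Proof. by rewrite -(mulVg a) mulA mulgV mul1g. Qed.
Lemma mulKg n (a b : C n) : mul (inv a) (mul a b) = b.
Proof. by rewrite mulA mulVg mul1g. Qed.
Lemma mulgK n (a b : C n) : mul (mul b a) (inv a) = b.
Proof. by rewrite -mulA mulgV mulg1. Qed.
Lemma mulg_eq1 n (a b : C n) : mul a b = a -> b = one n.
Proof. by move=> H; rewrite -(mulKg a b) H mulVg. Qed.
Lemma inv_uniq n (a b : C n) : mul a b = one n -> a = inv b.
Proof. by move=> H; rewrite -(mulgK b a) H mul1g. Qed.
Lemma inv1 n : inv (one n) = one (c0:=C) n.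
Proof. by rewrite -(mulg1 (inv _)) mulVg. Qed.
Lemma act_inv n (g : C n) i : i <= n -> act (inv g) (act g i) = i.
Proof. by move=> hi; rewrite -actM // mulVg act1. Qed.
Lemma face1 n i : i <= n.+1 -> face i (one (c0:=C) n.+1) = one n.
Proof.
move=> hi; apply: (@mulg_eq1 _ (face i (one n.+1))).
by rewrite -{3}(mul1g (one n.+1)) face_mul // inv1 act1.
Qed.
Lemma degen1 n i : i <= n -> degen i (one (c0:=C) n) = one n.+1.
Proof.
move=> hi; apply: (@mulg_eq1 _ (degen i (one n))).
by rewrite -{3}(mul1g (one n)) degen_mul // inv1 act1.
Qed.
Lemma face_inv n (g : C n.+1) a : a <= n.+1 ->
  face a (inv g) = inv (face (act g a) g).
Proof.
move=> ha.
have hb : act g a <= n.+1 by apply: act_range.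
have := face_mul g (inv g) hb.
rewrite mulgV face1 // act_inv // => H.
by rewrite -(mulKg (face (act g a) g) (face a (inv g))) -H mulg1.
Qed.
End Grp.

Section P.
Variables (G N : CSG) (pi : forall n, G n -> N n).
Hypothesis Hm : is_csg_morphism pi.

Lemma piM n (g h : G n) : pi (mul g h) = mul (pi g) (pi h).
Proof. by case: Hm => _ [H _]; apply: H. Qed.
Lemma pi_act n (g : G n) i : i <= n -> act (pi g) i = act g i.
Proof. by case: Hm => _ [_ H]; apply: H. Qed.
Lemma pi_face n i (g : G n.+1) : i <= n.+1 -> pi (face i g) = face i (pi g).
Proof. by case: Hm => [[H _] _]; apply: H. Qed.
Lemma pi_degen n i (g : G n) : i <= n -> pi (degen i g) = degen i (pi g).
Proof. by case: Hm => [[_ H] _]; apply: H. Qed.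
Lemma pi1 n : pi (one n) = one n.
Proof. by apply: (@mulg_eq1 _ _ (pi (one n))); rewrite -piM mul1g. Qed.
Lemma piV n (g : G n) : pi (inv g) = inv (pi g).
Proof. by apply: inv_uniq; rewrite -piM mulVg pi1. Qed.

Definition inP n (g : G n) := pi g = one n.
Lemma inP1 n : inP (one n). Proof. exact: pi1. Qed.
Lemma inPM n (g h : G n) : inP g -> inP h -> inP (mul g h).
Proof. by rewrite /inP piM => -> ->; rewrite mul1g. Qed.
Lemma inPV n (g : G n) : inP g -> inP (inv g).
Proof. by rewrite /inP piV => ->; rewrite inv1. Qed.
Lemma inP_face n i (g : G n.+1) : i <= n.+1 -> inP g -> inP (face i g).
Proof. by rewrite /inP => hi; rewrite pi_face // => ->; rewrite face1. Qed.
Lemma inP_degen n i (g : G n) : i <= n -> inP g -> inP (degen i g).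
Proof. by rewrite /inP => hi; rewrite pi_degen // => ->; rewrite degen1. Qed.
Lemma inP_act n (g : G n) i : i <= n -> inP g -> act g i = i.
Proof. by move=> hi hg; rewrite -pi_act // hg act1. Qed.
Lemma faceMP n i (g h : G n.+1) : i <= n.+1 -> inP g ->
  face i (mul g h) = mul (face i g) (face i h).
Proof. by move=> hi hg; have hv := inPV hg; rewrite face_mul // inP_act. Qed.
Lemma degenMP n i (g h : G n) : i <= n -> inP g ->
  degen i (mul g h) = mul (degen i g) (degen i h).
Proof. by move=> hi hg; have hv := inPV hg; rewrite degen_mul // inP_act. Qed.
Lemma faceVP n i (g : G n.+1) : i <= n.+1 -> inP g ->
  face i (inv g) = inv (face i g).
Proof. by move=> hi hg; rewrite face_inv // inP_act. Qed.
End P.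

Section Moore.
Variables (G N : CSG) (pi : forall n, G n -> N n).
Hypothesis Hm : is_csg_morphism pi.
Variables (n k : nat) (y : nat -> G n.+1).
Hypothesis Hy : forall i, i <= n.+2 -> i != k -> inP pi (y i).
Hypothesis Hc : forall i j, i < j -> j <= n.+2 -> i != k -> j != k ->
  face i (y j) = face j.-1 (y i).

Lemma step (w : G n.+2) (D : nat -> Prop) j t :
  inP pi w -> (forall i, D i -> face i w = y i) ->
  (forall i, D i -> i != k /\ ((i < t /\ i < j) \/ (t.+1 < i /\ j < i /\ i <= n.+2))) ->
  (t = j \/ t.+1 = j) -> t <= n.+1 -> j <= n.+2 -> j != k ->
  exists w', inP pi w' /\ forall i, (D i \/ i = j) -> face i w' = y i.
Proof.
move=> hw hD hcond ht htn hj hjk.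
set a := face j w. set b := y j.
have ha : inP pi a by apply: inP_face.
have hb : inP pi b by apply: Hy.
have hda : inP pi (degen t a) by apply: inP_degen.
have hdb : inP pi (degen t b) by apply: inP_degen.
have hva : inP pi (inv (degen t a)) by apply: inPV.
exists (mul w (mul (inv (degen t a)) (degen t b))); split.
  by apply: inPM => //; apply: inPM.
move=> i [Di|->].
- have [hik hc] := hcond i Di.
  have hin : i <= n.+2 by case: hc => [[h1 h2]|[h1 [h2 h3]]]; lia.
  have E : face i (degen t a) = face i (degen t b).
    case: hc => [[h1 h2]|[h1 [h2 h3]]].
    + rewrite !face_degen_lt //; try lia.
      congr degen; rewrite /a face_face // hD // /b [RHS]Hc //.
    + rewrite !face_degen_gt //.
      congr degen; rewrite /a -face_face // hD // /b [LHS]Hc //.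
  by rewrite (faceMP Hm) // hD // (faceMP Hm) // (faceVP Hm) // E mulVg mulg1.
- have hj' : j = t \/ j = t.+1 by lia.
  rewrite (faceMP Hm) // (faceMP Hm) // (faceVP Hm) // !face_degen_eq //.
  by rewrite mulA mulgV mul1g.
Qed.

Lemma moore : k <= n.+2 -> exists p : G n.+2,
  inP pi p /\ forall i, i <= n.+2 -> i != k -> face i p = y i.
Proof.
move=> hk.
have P1 : forall a, a <= k -> exists w : G n.+2, inP pi w /\
    forall i, (i < a \/ (n.+3 <= i /\ i <= n.+2)) -> face i w = y i.
  elim => [|a IH] ha.
    exists (one _); split; first exact: inP1.
    by move=> i hi; exfalso; lia.
  have [w [hw hD]] := IH (ltnW ha).
  have h1 : forall i, (i < a \/ (n.+3 <= i /\ i <= n.+2)) -> i != k /\ ((i < a /\ i < a) \/ (a.+1 < i /\ a < i /\ i <= n.+2)).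
    move=> i hi; split; [apply/eqP; lia | lia].
  have h5 : a != k by apply/eqP; lia.
  have [w' [hw' hD']] := @step w (fun i => i < a \/ (n.+3 <= i /\ i <= n.+2)) a a hw hD h1 (or_introl erefl) ltac:(lia) ltac:(lia) h5.
  exists w'; split => // i hi; apply: hD'.
  case: hi => [hi|hi]; last by left; right.
  by case: (ltngtP i a) => h; [left; left| lia | right].
have P2 : forall c, c <= n.+2 - k -> exists w : G n.+2, inP pi w /\
    forall i, (i < k \/ (n.+3 - c <= i /\ i <= n.+2)) -> face i w = y i.
  elim => [|c IH] hc.
    have [w [hw hD]] := P1 k (leqnn k).
    by exists w; split => // i hi; apply: hD; rewrite subn0 in hi.
  have [w [hw hD]] := IH (ltnW hc).
  have h1 : forall i, (i < k \/ (n.+3 - c <= i /\ i <= n.+2)) -> i != k /\ ((i < n.+1 - c /\ i < n.+2 - c) \/ ((n.+1 - c).+1 < i /\ n.+2 - c < i /\ i <= n.+2)).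
    move=> i hi; split; [apply/eqP; lia | lia].
  have h2 : n.+1 - c = n.+2 - c \/ (n.+1 - c).+1 = n.+2 - c by right; lia.
  have h5 : n.+2 - c != k by apply/eqP; lia.
  have [w' [hw' hD']] := @step w (fun i => i < k \/ (n.+3 - c <= i /\ i <= n.+2)) (n.+2 - c) (n.+1 - c) hw hD h1 h2 ltac:(lia) ltac:(lia) h5.
  exists w'; split => // i hi; apply: hD'.
  case: hi => [hi|hi]; first by left; left.
  by case: (ltngtP i (n.+2 - c)) => h; [lia | left; right; lia | right].
have [w [hw hD]] := P2 (n.+2 - k) (leqnn _).
exists w; split => // i hi hik; apply: hD.
case: (ltngtP i k) => h; [by left | right; lia | by move: hik; rewrite h eqxx].
Qed.
End Moore.

Theorem theoremB1 (G N : CSG) (pi : forall n, G n -> N n)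
  (Hpi : is_structural_projection pi)
  (eta : forall n, N n -> G n)
  (Heta : is_smap (X := N) (Y := G) eta)
  (Hsec : forall n (y : N n), pi n (eta n y) = y) :
  is_kan_fibration (X := G) (Y := N) pi.
Proof.
case: Hpi => [Hm _].
move=> m k x y Hk Hcomp Hface.
set w := eta m.+1 y.
have Hw : pi m.+1 w = y by apply: Hsec.
pose q i := mul (x i) (inv (face i w)).
have hq : forall i, i <= m.+1 -> i != k -> inP pi (q i).
  move=> i hi hik; rewrite /inP /q (piM Hm) (piV Hm) (pi_face Hm) // Hw Hface //.
  exact: mulgV.
have qE : forall i, q i = mul (x i) (inv (face i w)) by [].
clearbody q w.
have [p [hp hpf]] : exists p : G m.+1, inP pi p /\
    forall i, i <= m.+1 -> i != k -> face i p = q i.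
  case: m x y Hk Hcomp Hface w Hw q hq qE => [|n] x y Hk Hcomp Hface w Hw q hq qE.
    clear Hcomp; case: k Hk hq Hface => [|[|k]] // Hk hq Hface.
    + exists (degen 0 (q 1)); split; first by apply: (inP_degen Hm) => //; apply: hq.
      by case=> [|[|i]] // _ _; rewrite face_degen_eq //; right.
    + exists (degen 0 (q 0)); split; first by apply: (inP_degen Hm) => //; apply: hq.
      by case=> [|[|i]] // _ _; rewrite face_degen_eq //; left.
  apply: (moore Hm) => //.
  have fq : forall i j, i <= n.+1 -> j <= n.+2 -> j != k ->
      face i (q j) = mul (face i (x j)) (inv (face i (face j w))).
    move=> i j hi hj hjk.
    rewrite qE face_mul // face_inv //; last exact: act_range.
    congr (mul _ (inv (face _ _))).
    have hb : act (inv (x j)) i <= n.+1 by apply: act_range.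
    rewrite -(pi_act Hm) // (pi_face Hm) // Hw Hface // (pi_act Hm) //.
    by rewrite -actM // mulgV act1.
  move=> i j hij hj hik hjk.
  rewrite !fq //; try lia.
  by rewrite face_face // [face i (x j)]Hcomp.
exists (mul p w); split.
  move=> i hi hik; rewrite (faceMP Hm) // hpf // qE.
  by rewrite -mulA mulVg mulg1.
by rewrite (piM Hm) hp Hw mul1g.
Qed.
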